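(* Let $\mathcal A\subset\mathbb{R}^d$ be finite, $\lambda\in\mathbb{R}^{\mathcal A}$ and $w\in\mathbb{R}^{\mathcal A}_>$. Then the family $\lambda(t).X_{\mathcal A,w}$ has a limit as $t\to\infty$ in the Hausdorff topology on closed subsets of $\Delta^{\mathcal A}$, and $\lim_{t\to\infty}\lambda(t).X_{\mathcal A,w}=X(\mathcal S_\lambda,w)$, where $\mathcal S_\lambda$ is the regular subdivision of $\mathcal A$ induced by $\lambda$.
   Context: $\Delta^{\mathcal A}=\{z\in\mathbb{R}_{\ge0}^{\mathcal A}\mid\sum_{\mathbf a}z_{\mathbf a}=1\}$ with homogeneous coordinates and the $\ell_1$ metric $d(y,z)=\sum_{\mathbf a}|y_{\mathbf a}-z_{\mathbf a}|$; the Hausdorff distance between closed sets $X,Y$ is $\max\{\sup_{x\in X}\inf_{y\in Y}d(x,y),\sup_{y\in Y}\inf_{x\in X}d(x,y)\}$. For $\mathcal F\subset\mathcal A$, $\Delta^{\mathcal F}\subset\Delta^{\mathcal A}$ is the face with $z_{\mathbf a}=0$ for $\mathbf a\notin\mathcal F$. For $x\in\mathbb{R}^d_>$, $x^{\mathbf a}=\prod_j\exp(\mathbf a_j\log x_j)$. For $w\in\mathbb{R}^{\mathcal A}_>$, $X_{\mathcal F,w}$ is the closure in $\Delta^{\mathcal F}$ of $\{[w_{\mathbf f}x^{\mathbf f}\mid\mathbf f\in\mathcal F]\mid x\in\mathbb{R}^d_>\}$ (a real irrational toric variety, translated by $w$); $X_{\mathcal A,w}$ is the case $\mathcal F=\mathcal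 A$. The torus acts by $u.z=[u_{\mathbf a}z_{\mathbf a}]$. For $\lambda\in\mathbb{R}^{\mathcal A}$, $\lambda(t)\in\mathbb{R}^{\mathcal A}_>$ has coordinates $\lambda(t)_{\mathbf a}=\exp(t\lambda(\mathbf a))$. Regular subdivision: let $P_\lambda=\mathrm{conv}\{(\mathbf a,\lambda(\mathbf a))\}\subset\mathbb{R}^{d+1}$; upper faces are faces with an outward normal having positive last coordinate; $\mathcal S_\lambda$ is the collection of sets $\{\mathbf a\in\mathcal A\mid(\mathbf a,\lambda(\mathbf a))\in F\}$ for $F$ an upper face (the faces of $\mathcal S_\lambda$). For a subdivision $\mathcal S$, $X(\mathcal S,w):=\bigcup_{\mathcal F\text{ a face of }\mathcal S}X_{\mathcal F,w}$. *)

(* Defs.v *)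
From Stdlib Require Import Reals.
Open Scope R_scope.

(* Conventions:
   - The finite configuration A ⊂ R^d is given by N points A 0, ..., A (N-1),
     where A i : nat -> R has coordinates A i 0, ..., A i (d-1).
   - Elements of R^A (and points of Δ^A) are functions nat -> R, indexed by
     the labels 0..N-1 of the points of A.
   - A subset F ⊆ A is a predicate on the labels. *)

Definition Rset := (nat -> R) -> Prop.

Fixpoint rsum (n : nat) (f : nat -> R) : R :=
  match n with
  | O => 0
  | S m => rsum m f + f m
  end.

(* the standard simplex Δ^A (entries beyond the labels are normalised to 0) *)
Definition in_simplex (N : nat) (z : nat -> R) : Prop :=
  (forall i, (i < N)%nat -> 0 <= z i) /\
  rsum N z = 1 /\
  (forall i, (N <= i)%nat -> z i = 0).

Definition in_face_simplex (N : nat) (F : nat -> Prop) (z : nat -> R) : Prop :=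
  in_simplex N z /\ (forall i, (i < N)%nat -> ~ F i -> z i = 0).

Definition dist1 (N : nat) (y z : nat -> R) : R :=
  rsum N (fun i => Rabs (y i - z i)).

(* x^a = prod_j exp(a_j log x_j) *)
Definition monomial (d : nat) (x a : nat -> R) : R :=
  exp (rsum d (fun j => a j * ln (x j))).

Definition positive_vec (n : nat) (x : nat -> R) : Prop :=
  forall j, (j < n)%nat -> 0 < x j.

(* z = [w_f x^f | f ∈ F] in homogeneous coordinates on Δ^F:
   z ∈ Δ^F and z is proportional (positive factor) to (w_f x^f)_{f∈F} *)
Definition torus_orbit_pt (d N : nat) (A : nat -> nat -> R) (F : nat -> Prop)
    (w : nat -> R) (z : nat -> R) : Prop :=
  in_face_simplex N F z /\
  exists x : nat -> R, positive_vec d x /\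
    exists c : R, 0 < c /\
      forall i, (i < N)%nat -> F i -> z i = c * (w i * monomial d x (A i)).

Definition closure_in (N : nat) (F : nat -> Prop) (S : Rset) : Rset :=
  fun z => in_face_simplex N F z /\
    forall eps, 0 < eps -> exists y, S y /\ dist1 N z y < eps.

Definition X_Fw (d N : nat) (A : nat -> nat -> R) (F : nat -> Prop)
    (w : nat -> R) : Rset :=
  closure_in N F (torus_orbit_pt d N A F w).

Definition torus_act (N : nat) (u z y : nat -> R) : Prop :=
  in_simplex N y /\
  exists c, 0 < c /\ forall i, (i < N)%nat -> y i = c * (u i * z i).

Definition act_set (N : nat) (u : nat -> R) (X : Rset) : Rset :=
  fun y => exists z, X z /\ torus_act N u z y.

Definition lam_t (lam : nat -> R) (t : R) : nat -> R :=
  fun i => exp (t * lam i).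

Definition lift (d : nat) (A : nat -> nat -> R) (lam : nat -> R) (i : nat)
    : nat -> R :=
  fun k => if Nat.eqb k d then lam i else A i k.

Definition dot (n : nat) (u v : nat -> R) : R := rsum n (fun k => u k * v k).

Definition in_P (d N : nat) (A : nat -> nat -> R) (lam : nat -> R)
    (p : nat -> R) : Prop :=
  exists mu : nat -> R,
    (forall i, (i < N)%nat -> 0 <= mu i) /\ rsum N mu = 1 /\
    forall k, (k <= d)%nat -> p k = rsum N (fun i => mu i * lift d A lam i k).

Definition face_with_normal (d N : nat) (A : nat -> nat -> R) (lam : nat -> R)
    (nrm : nat -> R) (p : nat -> R) : Prop :=
  in_P d N A lam p /\
  forall q, in_P d N A lam q -> dot (S d) nrm q <= dot (S d) nrm p.

(* F is a face of S_λ: F = {a ∈ A | (a,λ(a)) ∈ G} for an upper face G of P_λ,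
   i.e. a face with an outward normal whose last coordinate is positive *)
Definition face_of_Slam (d N : nat) (A : nat -> nat -> R) (lam : nat -> R)
    (F : nat -> Prop) : Prop :=
  exists nrm : nat -> R, 0 < nrm d /\
    forall i, F i <-> ((i < N)%nat /\ face_with_normal d N A lam nrm (lift d A lam i)).

Definition X_subdiv (d N : nat) (A : nat -> nat -> R) (lam w : nat -> R) : Rset :=
  fun z => exists F, face_of_Slam d N A lam F /\ X_Fw d N A F w z.

(* Hausdorff convergence of closed subsets of Δ^A as t -> ∞:
   for every eps > 0, eventually each set lies in the eps-neighbourhood of the other
   (equivalent to: Hausdorff distance -> 0). *)
Definition hausdorff_conv (N : nat) (Xt : R -> Rset) (Y : Rset) : Prop :=
  forall eps, 0 < eps -> exists T, forall t, T < t ->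
    (forall x, Xt t x -> exists y, Y y /\ dist1 N x y < eps) /\
    (forall y, Y y -> exists x, Xt t x /\ dist1 N x y < eps).

(* Main.v *)
Require Import Defs.
From Stdlib Require Import Reals Lra Lia Psatz List Classical ClassicalEpsilon ZArith.
Open Scope R_scope.

Lemma rsum_ext n f g : (forall i, (i < n)%nat -> f i = g i) -> rsum n f = rsum n g.
Proof. induction n; simpl; intros H; auto. rewrite IHn by (intros; apply H; lia). rewrite H by lia. auto. Qed.

Lemma rsum_plus n f g : rsum n (fun i => f i + g i) = rsum n f + rsum n g.
Proof. induction n; simpl; [lra|rewrite IHn; lra]. Qed.

Lemma rsum_minus n f g : rsum n (fun i => f i - g i) = rsum n f - rsum n g.
Proof. induction n; simpl; [lra|rewrite IHn; lra]. Qed.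

Lemma rsum_scal n c f : rsum n (fun i => c * f i) = c * rsum n f.
Proof. induction n; simpl; [lra|rewrite IHn; lra]. Qed.

Lemma rsum_zero n : rsum n (fun _ => 0) = 0.
Proof. induction n; simpl; [lra|rewrite IHn; lra]. Qed.

Lemma rsum_le n f g : (forall i, (i < n)%nat -> f i <= g i) -> rsum n f <= rsum n g.
Proof. induction n; simpl; intros H; [lra|]. assert (f n <= g n) by (apply H; lia).
 assert (rsum n f <= rsum n g) by (apply IHn; intros; apply H; lia). lra. Qed.

Lemma rsum_nonneg n f : (forall i, (i < n)%nat -> 0 <= f i) -> 0 <= rsum n f.
Proof. intros H. rewrite <- (rsum_zero n). apply rsum_le. auto. Qed.

Lemma rsum_const_le n f b : (forall i, (i < n)%nat -> f i <= b) -> rsum n f <= INR n * b.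
Proof. induction n; cbn [rsum]; intros H; [simpl; lra|]. assert (f n <= b) by (apply H; lia).
 assert (rsum n f <= INR n * b) by (apply IHn; intros; apply H; lia).
 rewrite S_INR in *. lra. Qed.

Lemma rsum_elem_le n f j : (forall i, (i < n)%nat -> 0 <= f i) -> (j < n)%nat -> f j <= rsum n f.
Proof. induction n; simpl; intros H Hj; [lia|].
 destruct (Nat.eq_dec j n). subst. assert (0 <= rsum n f) by (apply rsum_nonneg; intros; apply H; lia). lra.
 assert (f j <= rsum n f) by (apply IHn; [intros; apply H; lia| lia]). assert (0 <= f n) by (apply H; lia). lra. Qed.

Lemma rsum_abs n f : Rabs (rsum n f) <= rsum n (fun i => Rabs (f i)).
Proof. induction n; simpl. rewrite Rabs_R0; lra.
 eapply Rle_trans. apply Rabs_triang. lra. Qed.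

Lemma rsum_swap n m (f : nat -> nat -> R) :
  rsum n (fun i => rsum m (fun j => f i j)) = rsum m (fun j => rsum n (fun i => f i j)).
Proof. induction n; simpl. rewrite rsum_zero; auto.
 rewrite IHn. rewrite <- rsum_plus. auto. Qed.

Lemma rsum_indic n j c : (j < n)%nat -> rsum n (fun i => if Nat.eqb i j then c else 0) = c.
Proof. induction n; simpl; intros H; [lia|].
 destruct (Nat.eq_dec j n). subst. rewrite Nat.eqb_refl.
 rewrite (rsum_ext _ _ (fun _ => 0)). rewrite rsum_zero; lra.
 intros i Hi. destruct (Nat.eqb_spec i n); [lia|auto].
 destruct (Nat.eqb_spec n j); [lia|]. rewrite IHn by lia. lra. Qed.

Lemma rsum_indic_mul n j f : (j < n)%nat -> rsum n (fun i => (if Nat.eqb i j then 1 else 0) * f i) = f j.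
Proof. intros H. rewrite (rsum_ext _ _ (fun i => if Nat.eqb i j then f j else 0)).
 apply rsum_indic; auto. intros i _. destruct (Nat.eqb_spec i j); subst; lra. Qed.

Definition dec (P : Prop) : bool := if excluded_middle_informative P then true else false.
Lemma dec_true P : dec P = true <-> P.
Proof. unfold dec; destruct (excluded_middle_informative P); split; auto; congruence. Qed.
Lemma dec_false P : dec P = false <-> ~ P.
Proof. unfold dec; destruct (excluded_middle_informative P); split; intros H; auto; try congruence; contradiction. Qed.

Lemma rsum_split n (F : nat -> Prop) f :
  rsum n f = rsum n (fun i => if dec (F i) then f i else 0) + rsum n (fun i => if dec (F i) then 0 else f i).
Proof. rewrite <- rsum_plus. apply rsum_ext. intros i _. destruct (dec (F i)); lra. Qed.

Lemma fin_pos_min n (Q : nat -> Prop) (a : nat -> R) :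
  (forall i, (i < n)%nat -> Q i -> 0 < a i) -> exists d, 0 < d /\ forall i, (i < n)%nat -> Q i -> d <= a i.
Proof. induction n; intros H. exists 1; split; [lra|intros; lia].
 destruct IHn as [d [Hd Hd']]. intros; apply H; auto; lia.
 destruct (classic (Q n)) as [Qn|Qn].
 - assert (0 < a n) by (apply H; auto). exists (Rmin d (a n)). split. apply Rmin_pos; auto.
   intros i Hi Qi. destruct (Nat.eq_dec i n). subst. apply Rmin_r.
   eapply Rle_trans. apply Rmin_l. apply Hd'; auto; lia.
 - exists d. split; auto. intros i Hi Qi. destruct (Nat.eq_dec i n). subst; contradiction. apply Hd'; auto; lia. Qed.

Lemma fin_argmax n (a : nat -> R) : (0 < n)%nat -> exists j, (j < n)%nat /\ forall i, (i < n)%nat -> a i <= a j.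
Proof. induction n; intros H; [lia|]. destruct n. exists 0%nat. split; [lia|]. intros i Hi. replace i with 0%nat by lia. lra.
 destruct IHn as [j [Hj Hj']]. lia.
 destruct (Rle_dec (a (S n)) (a j)).
 exists j. split; [lia|]. intros i Hi. destruct (Nat.eq_dec i (S n)). subst; auto. apply Hj'; lia.
 exists (S n). split; [lia|]. intros i Hi. destruct (Nat.eq_dec i (S n)). subst; lra. assert (a i <= a j) by (apply Hj'; lia). lra. Qed.

Lemma exp_small c a : 0 < c -> 0 < a -> exists T, forall t, T < t -> exp (-(t*c)) < a.
Proof. intros Hc Ha. exists (Rabs (ln a) / c). intros t Ht.
 rewrite <- (exp_ln a) by auto. apply exp_increasing.
 assert (Rabs (ln a) < t * c). { apply (Rmult_lt_compat_r c) in Ht; auto. unfold Rdiv in Ht. rewrite Rmult_assoc, Rinv_l in Ht; lra. }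
 pose proof (Rle_abs (- ln a)). rewrite Rabs_Ropp in H0. lra. Qed.

Lemma d1_sym N x y : dist1 N x y = dist1 N y x.
Proof. unfold dist1. apply rsum_ext. intros. rewrite Rabs_minus_sym; auto. Qed.
Lemma d1_tri N x y z : dist1 N x z <= dist1 N x y + dist1 N y z.
Proof. unfold dist1. rewrite <- rsum_plus. apply rsum_le. intros.
 replace (x i - z i) with ((x i - y i) + (y i - z i)) by ring. apply Rabs_triang. Qed.
Lemma d1_nonneg N x y : 0 <= dist1 N x y.
Proof. apply rsum_nonneg. intros; apply Rabs_pos. Qed.
Lemma d1_refl N x : dist1 N x x = 0.
Proof. unfold dist1. rewrite (rsum_ext _ _ (fun _ => 0)). apply rsum_zero. intros. rewrite Rminus_diag, Rabs_R0; auto. Qed.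

Definition Row := ((nat -> R) * R)%type.
Definition lhs (n : nat) (r : Row) (v : nat -> R) := rsum n (fun j => fst r j * v j).

Lemma list_argmax {T} (l : list T) (f : T -> R) : l <> nil -> exists x, In x l /\ forall y, In y l -> f y <= f x.
Proof. induction l as [|a l IH]; intros H; [congruence|].
 destruct l as [|b l']. exists a. split; [left; auto|]. intros y [->|[]]; lra.
 destruct IH as [x [Hx Hx']]. congruence.
 destruct (Rle_dec (f a) (f x)).
 exists x. split; [right; auto|]. intros y [<-|Hy]; auto.
 exists a. split; [left; auto|]. intros y [<-|Hy]; [lra|]. specialize (Hx' y Hy). lra. Qed.

Fixpoint sumabs (n : nat) (L : list Row) : R :=
  match L with nil => 0 | r :: L' => Rabs (fst r n) + sumabs n L' end.
Lemma sumabs_ge n L r : In r L -> Rabs (fst r n) <= sumabs n L.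
Proof. induction L; simpl; intros H; [contradiction|]. assert (0 <= sumabs n L).
 { clear. induction L; simpl; [lra|]. pose proof (Rabs_pos (fst a n)); lra. }
 destruct H as [->|H]. lra. specialize (IHL H). pose proof (Rabs_pos (fst a n)). lra. Qed.
Lemma sumabs_nonneg n L : 0 <= sumabs n L.
Proof. induction L; simpl; [lra|]. pose proof (Rabs_pos (fst a n)); lra. Qed.

Definition comb (n : nat) (p q : Row) : Row :=
  (fun j => (- fst q n) * fst p j + fst p n * fst q j, (- fst q n) * snd p + fst p n * snd q).

Lemma lhs_comb n p q v : lhs n (comb n p q) v = (- fst q n) * lhs n p v + fst p n * lhs n q v.
Proof. unfold lhs, comb; simpl. rewrite <- !rsum_scal, <- rsum_plus. apply rsum_ext. intros; ring. Qed.

Lemma lhs_S n r v : lhs (S n) r v = lhs n r v + fst r n * v n.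
Proof. reflexivity. Qed.

Lemma lhs_ext n r v v' : (forall j, (j < n)%nat -> v j = v' j) -> lhs n r v = lhs n r v'.
Proof. intros H. unfold lhs. apply rsum_ext. intros. rewrite H; auto. Qed.

Lemma FM : forall n (L : list Row),
  (forall e, 0 < e -> exists v, forall r, In r L -> lhs n r v <= snd r + e) ->
  exists v, forall r, In r L -> lhs n r v <= snd r.
Proof.
induction n as [|n IH]; intros L H.
- exists (fun _ => 0). intros r Hr. unfold lhs; simpl.
  apply Rnot_lt_le. intros Hlt. destruct (H (- snd r / 2)) as [v Hv]. lra.
  specialize (Hv r Hr). unfold lhs in Hv; simpl in Hv. lra.
- set (Z := filter (fun r => dec (fst r n = 0)) L).
  set (Pos := filter (fun r => dec (0 < fst r n)) L).
  set (Neg := filter (fun r => dec (fst r n < 0)) L).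
  set (L' := Z ++ flat_map (fun p => map (comb n p) Neg) Pos).
  assert (HZ : forall r, In r Z <-> In r L /\ fst r n = 0).
  { intros r. unfold Z. rewrite filter_In, dec_true. tauto. }
  assert (HP : forall r, In r Pos <-> In r L /\ 0 < fst r n).
  { intros r. unfold Pos. rewrite filter_In, dec_true. tauto. }
  assert (HN : forall r, In r Neg <-> In r L /\ fst r n < 0).
  { intros r. unfold Neg. rewrite filter_In, dec_true. tauto. }
  assert (HL' : forall r, In r L' -> In r Z \/ exists p q, In p Pos /\ In q Neg /\ r = comb n p q).
  { intros r Hr. unfold L' in Hr. apply in_app_or in Hr. destruct Hr as [Hr|Hr]; auto.
    right. apply in_flat_map in Hr. destruct Hr as [p [Hp Hr]]. apply in_map_iff in Hr.
    destruct Hr as [q [<- Hq]]. exists p, q. auto. }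
  destruct (IH L') as [v' Hv'].
  { intros e He. set (S0 := sumabs n L).
    pose proof (sumabs_nonneg n L) as HS0. fold S0 in HS0.
    destruct (H (e / (1 + 2 * S0))) as [v Hv].
    { apply Rdiv_lt_0_compat; lra. }
    set (e0 := e / (1 + 2 * S0)) in *.
    assert (He0 : e0 * (1 + 2 * S0) = e) by (unfold e0; field; lra).
    assert (0 < e0) by (unfold e0; apply Rdiv_lt_0_compat; lra).
    exists v. intros r Hr. destruct (HL' r Hr) as [Hz|[p [q [Hp [Hq ->]]]]].
    + apply HZ in Hz. destruct Hz as [HrL Hr0]. specialize (Hv r HrL). rewrite lhs_S, Hr0 in Hv.
      assert (e0 <= e) by nra. lra.
    + apply HP in Hp. apply HN in Hq. destruct Hp as [HpL Hp0], Hq as [HqL Hq0].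
      pose proof (Hv p HpL) as Hvp. pose proof (Hv q HqL) as Hvq. rewrite lhs_S in Hvp, Hvq.
      rewrite lhs_comb. unfold comb; simpl.
      pose proof (sumabs_ge n L p HpL). pose proof (sumabs_ge n L q HqL).
      rewrite Rabs_right in H1 by lra. rewrite Rabs_left in H2 by lra. fold S0 in H1, H2.
      nra. }
  set (rest := fun r => lhs n r v').
  set (lb := fun q : Row => (snd q - rest q) / fst q n).
  assert (Hcomb : forall p q, In p Pos -> In q Neg -> lb q <= (snd p - rest p) / fst p n).
  { intros p q Hp Hq. assert (Hr : In (comb n p q) L').
    { unfold L'. apply in_or_app. right. apply in_flat_map. exists p. split; auto. apply in_map; auto. }
    specialize (Hv' _ Hr). rewrite lhs_comb in Hv'. unfold comb in Hv'; simpl in Hv'.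
    apply HP in Hp; apply HN in Hq. destruct Hp as [_ Hp0], Hq as [_ Hq0].
    unfold lb. fold (rest p) (rest q) in Hv'.
    apply Rmult_le_reg_r with (fst p n * - fst q n). nra.
    replace ((snd q - rest q) / fst q n * (fst p n * - fst q n)) with (fst p n * (rest q - snd q)) by (field; lra).
    replace ((snd p - rest p) / fst p n * (fst p n * - fst q n)) with (- fst q n * (snd p - rest p)) by (field; lra).
    nra. }
  assert (Hvn : exists vn, (forall q, In q Neg -> lb q <= vn) /\ (forall p, In p Pos -> vn <= (snd p - rest p) / fst p n)).
  { destruct Neg as [|q0 Ng] eqn:ENeg.
    - destruct Pos as [|p0 Ps] eqn:EPos.
      + exists 0. split; intros ? [].
      + destruct (list_argmax (p0 :: Ps) (fun p => - ((snd p - rest p) / fst p n))) as [p [Hp Hp']]. congruence.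
        exists ((snd p - rest p) / fst p n). split. intros ? []. intros p1 Hp1. specialize (Hp' p1 Hp1). lra.
    - destruct (list_argmax (q0 :: Ng) lb) as [q [Hq Hq']]. congruence.
      exists (lb q). split; auto; intros p Hp; apply Hcomb; auto. }
  destruct Hvn as [vn [Hlo Hhi]].
  exists (fun j => if Nat.eqb j n then vn else v' j). intros r Hr.
  rewrite lhs_S. rewrite Nat.eqb_refl.
  rewrite (lhs_ext n r _ v') by (intros j Hj; destruct (Nat.eqb_spec j n); [lia|auto]).
  fold (rest r).
  destruct (Rtotal_order (fst r n) 0) as [Hneg|[H0|Hpos]].
  + assert (Hq : In r Neg) by (apply HN; auto). specialize (Hlo r Hq). unfold lb in Hlo.
    assert (snd r - rest r = fst r n * ((snd r - rest r) / fst r n)) by (field; lra). nra.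
  + assert (Hz : In r L') by (unfold L'; apply in_or_app; left; apply HZ; auto).
    specialize (Hv' r Hz). fold (rest r) in Hv'. rewrite H0. lra.
  + assert (Hp : In r Pos) by (apply HP; auto). specialize (Hhi r Hp).
    assert (snd r - rest r = fst r n * ((snd r - rest r) / fst r n)) by (field; lra). nra.
Qed.

Lemma fin_min_nat K (Q : nat -> R -> Prop) :
  (forall k e e', 0 < e' -> e' <= e -> Q k e -> Q k e') ->
  (forall k, (k <= K)%nat -> exists e, 0 < e /\ Q k e) -> exists e, 0 < e /\ forall k, (k <= K)%nat -> Q k e.
Proof. intros Hm. induction K; intros H.
 - destruct (H 0%nat) as [e [He Qe]]; [lia|]. exists e. split; auto. intros k Hk. replace k with 0%nat by lia; auto.
 - destruct IHK as [e [He Qe]]. intros; apply H; lia.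
   destruct (H (S K)) as [e' [He' Qe']]; [lia|]. exists (Rmin e e'). split. apply Rmin_pos; auto.
   intros k Hk. destruct (Nat.eq_dec k (S K)). subst. eapply Hm; [apply Rmin_pos; auto|apply Rmin_r|auto].
   eapply Hm; [apply Rmin_pos; auto|apply Rmin_l|apply Qe; lia]. Qed.

Definition upd (f : nat -> nat) (n k : nat) : nat -> nat := fun i => if Nat.eqb i n then k else f i.

Lemma fin_unif M N (P : (nat -> nat) -> R -> Prop) :
  (forall f g e, (forall i, (i < N)%nat -> f i = g i) -> P f e -> P g e) ->
  (forall f e e', 0 < e' -> e' <= e -> P f e -> P f e') ->
  (forall f, (forall i, (f i <= M)%nat) -> exists e, 0 < e /\ P f e) ->
  exists e, 0 < e /\ forall f, (forall i, (f i <= M)%nat) -> P f e.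
Proof. revert P. induction N; intros P Hext Hm H.
 - destruct (H (fun _ => 0%nat)) as [e [He Pe]]. intros; lia. exists e. split; auto. intros f _.
   eapply Hext; [|apply Pe]. intros; lia.
 - destruct (IHN (fun f e => forall k, (k <= M)%nat -> P (upd f N k) e)) as [e [He Pe]].
   + intros f g e Hfg Hf k Hk. eapply Hext; [|apply (Hf k Hk)]. intros i Hi. unfold upd.
     destruct (Nat.eqb_spec i N); auto. apply Hfg; lia.
   + intros f e e' H1 H2 Hf k Hk. eapply Hm; eauto.
   + intros f Hf. apply fin_min_nat. intros; eapply Hm; eauto.
     intros k Hk. apply H. intros i. unfold upd. destruct (Nat.eqb i N); auto.
   + exists e. split; auto. intros f Hf. eapply Hext; [|apply (Pe f Hf (f N) (Hf N))].
     intros i Hi. unfold upd. destruct (Nat.eqb_spec i N); subst; auto. Qed.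

Definition gfun (d : nat) (A : nat -> nat -> R) (lam v : nat -> R) (i : nat) : R :=
  lam i + rsum d (fun j => A i j * v j).

Lemma dot_lift d A lam nrm i :
  dot (S d) nrm (lift d A lam i) = rsum d (fun k => nrm k * A i k) + nrm d * lam i.
Proof. unfold dot. simpl. unfold lift at 2. rewrite Nat.eqb_refl. f_equal. apply rsum_ext.
 intros k Hk. unfold lift. destruct (Nat.eqb_spec k d); [lia|auto]. Qed.

Lemma in_P_lift d N A lam i : (i < N)%nat -> in_P d N A lam (lift d A lam i).
Proof. intros Hi. exists (fun j => if Nat.eqb j i then 1 else 0). split; [|split].
 intros j _. destruct (Nat.eqb j i); lra. apply rsum_indic; auto.
 intros k _. symmetry; apply (rsum_indic_mul N i (fun j => lift d A lam j k)); auto. Qed.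

Lemma dot_P_le d N A lam nrm q B : in_P d N A lam q ->
  (forall j, (j < N)%nat -> dot (S d) nrm (lift d A lam j) <= B) -> dot (S d) nrm q <= B.
Proof. intros [mu [Hmu [Hs Hq]]] HB. unfold dot.
 rewrite (rsum_ext _ _ (fun k => rsum N (fun j => mu j * (nrm k * lift d A lam j k)))).
 2:{ intros k Hk. rewrite Hq by lia. rewrite <- rsum_scal. apply rsum_ext. intros; ring. }
 rewrite rsum_swap.
 rewrite (rsum_ext _ _ (fun j => mu j * dot (S d) nrm (lift d A lam j))).
 2:{ intros j Hj. unfold dot. rewrite <- rsum_scal. auto. }
 apply Rle_trans with (rsum N (fun j => mu j * B)). apply rsum_le. intros j Hj.
 apply Rmult_le_compat_l; auto. rewrite (rsum_ext _ _ (fun j => B * mu j)) by (intros; ring).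
 rewrite rsum_scal, Hs. lra. Qed.

Definition Ff d N A lam v : nat -> Prop :=
  fun i => (i < N)%nat /\ forall j, (j < N)%nat -> gfun d A lam v j <= gfun d A lam v i.

Lemma dot_lift_v d A lam v i :
  dot (S d) (fun k => if Nat.eqb k d then 1 else v k) (lift d A lam i) = gfun d A lam v i.
Proof. rewrite dot_lift. rewrite Nat.eqb_refl. unfold gfun. rewrite Rplus_comm. f_equal; [ring|].
 apply rsum_ext. intros k Hk. destruct (Nat.eqb_spec k d); [lia|ring]. Qed.

Lemma Ff_face d N A lam v : face_of_Slam d N A lam (Ff d N A lam v).
Proof. exists (fun k => if Nat.eqb k d then 1 else v k). rewrite Nat.eqb_refl. split; [lra|].
 intros i. unfold Ff. split.
 - intros [Hi Hmax]. split; auto. split. apply in_P_lift; auto. intros q Hq.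
   eapply (dot_P_le d N A lam); eauto. intros j Hj. rewrite !dot_lift_v. auto.
 - intros [Hi [_ Hmax]]. split; auto. intros j Hj. rewrite <- !dot_lift_v. apply Hmax. apply in_P_lift; auto. Qed.

Lemma face_gaps d N A lam F : face_of_Slam d N A lam F ->
  exists v, (forall i, F i -> (i < N)%nat /\ forall j, (j < N)%nat -> gfun d A lam v j <= gfun d A lam v i)
   /\ (forall i, (i < N)%nat -> ~ F i -> exists j, (j < N)%nat /\ gfun d A lam v i < gfun d A lam v j).
Proof. intros [nrm [Hd HF]]. exists (fun k => nrm k / nrm d).
 assert (Hdot : forall i, dot (S d) nrm (lift d A lam i) = nrm d * gfun d A lam (fun k => nrm k / nrm d) i).
 { intros i. rewrite dot_lift. unfold gfun. rewrite Rmult_plus_distr_l, <- rsum_scal. rewrite Rplus_comm. f_equal.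
   apply rsum_ext. intros. field. lra. }
 split.
 - intros i Fi. apply HF in Fi. destruct Fi as [Hi [_ Hmax]]. split; auto. intros j Hj.
   specialize (Hmax _ (in_P_lift d N A lam j Hj)). rewrite !Hdot in Hmax.
   apply Rmult_le_reg_l with (nrm d); auto.
 - intros i Hi nF. destruct (classic (exists j, (j < N)%nat /\ gfun d A lam (fun k => nrm k / nrm d) i < gfun d A lam (fun k => nrm k / nrm d) j)) as [E|E]; auto.
   exfalso. apply nF. apply HF. split; auto. split. apply in_P_lift; auto. intros q Hq.
   eapply (dot_P_le d N A lam); eauto. intros j Hj. rewrite !Hdot. apply Rmult_le_compat_l; [lra|].
   apply Rnot_lt_le. intros Hlt. apply E. exists j. split; auto. Qed.

Definition rowik (A : nat -> nat -> R) (lam : nat -> R) (i k : nat) : Row :=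
  (fun j => A k j - A i j, lam i - lam k).

Lemma lhs_rowik d A lam v i k :
  lhs d (rowik A lam i k) v - snd (rowik A lam i k) = gfun d A lam v k - gfun d A lam v i.
Proof. unfold lhs, rowik, gfun; simpl.
 rewrite (rsum_ext _ _ (fun j => A k j * v j - A i j * v j)) by (intros; ring).
 rewrite rsum_minus. ring. Qed.

Lemma key_lemma d N A lam : exists c, 0 < c /\ forall v, exists v', forall i, (i < N)%nat ->
  (forall k, (k < N)%nat -> gfun d A lam v k - gfun d A lam v i < c) -> Ff d N A lam v' i.
Proof.
 set (g := gfun d A lam).
 destruct (fin_unif 1 N (fun f c =>
   (exists v', forall i, (i < N)%nat -> f i = 1%nat -> forall k, (k < N)%nat -> g v' k <= g v' i) \/
   (forall v, exists i, (i < N)%nat /\ f i = 1%nat /\ exists k, (k < N)%nat /\ g v k - g v i >= c)))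
   as [c [Hc Hall]].
 - intros f f' e Hff [[v' Hv']|H2]; [left|right].
   + exists v'. intros i Hi Hf. apply Hv'; auto. rewrite Hff; auto.
   + intros v. destruct (H2 v) as [i [Hi [Hf Hk]]]. exists i. rewrite <- Hff; auto.
 - intros f e e' _ Hle [H1|H2]; [left; auto|right]. intros v. destruct (H2 v) as [i [Hi [Hf [k [Hk Hg]]]]].
   exists i. repeat split; auto. exists k. split; auto. lra.
 - intros f _. set (L := flat_map (fun i => map (fun k => rowik A lam i k) (seq 0 N)) (filter (fun i => Nat.eqb (f i) 1) (seq 0 N))).
   assert (HL : forall r, In r L <-> exists i k, (i < N)%nat /\ f i = 1%nat /\ (k < N)%nat /\ r = rowik A lam i k).
   { intros r. unfold L. rewrite in_flat_map. split.
     - intros [i [Hi Hr]]. apply filter_In in Hi. destruct Hi as [Hi Hf]. apply in_seq in Hi.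
       apply in_map_iff in Hr. destruct Hr as [k [<- Hk]]. apply in_seq in Hk. apply Nat.eqb_eq in Hf.
       exists i, k. repeat split; auto; lia.
     - intros [i [k [Hi [Hf [Hk ->]]]]]. exists i. split. apply filter_In. split. apply in_seq; lia. apply Nat.eqb_eq; auto.
       apply in_map. apply in_seq; lia. }
   destruct (classic (exists v, forall r, In r L -> lhs d r v <= snd r)) as [[v Hv]|NE].
   + exists 1. split; [lra|]. left. exists v. intros i Hi Hf k Hk.
     assert (Hr : In (rowik A lam i k) L) by (apply HL; exists i, k; auto).
     specialize (Hv _ Hr). pose proof (lhs_rowik d A lam v i k). unfold g. lra.
   + destruct (classic (forall e, 0 < e -> exists v, forall r, In r L -> lhs d r v <= snd r + e)) as [AP|NAP].
     * exfalso. apply NE. apply FM; auto.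
     * apply not_all_ex_not in NAP. destruct NAP as [e NAP]. apply imply_to_and in NAP. destruct NAP as [He NAP].
       exists e. split; auto. right. intros v. destruct (classic (exists i, (i < N)%nat /\ f i = 1%nat /\ exists k, (k < N)%nat /\ g v k - g v i >= e)) as [E|E]; auto.
       exfalso. apply NAP. exists v. intros r Hr. apply HL in Hr. destruct Hr as [i [k [Hi [Hf [Hk ->]]]]].
       apply Rnot_lt_le. intros Hlt. apply E. exists i. repeat split; auto. exists k. split; auto.
       pose proof (lhs_rowik d A lam v i k). unfold g. lra.
 - exists c. split; auto. intros v.
   set (f := fun i => if dec (forall k, (k < N)%nat -> g v k - g v i < c) then 1%nat else 0%nat).
   destruct (Hall f) as [[v' Hv']|H2].
   + intros i. unfold f. destruct (dec _); lia.
   + exists v'. intros i Hi Hgap. split; auto. apply Hv'; auto. unfold f.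
     assert (dec (forall k, (k < N)%nat -> g v k - g v i < c) = true) as -> by (apply dec_true; auto). auto.
   + exfalso. destruct (H2 v) as [i [Hi [Hf [k [Hk Hg]]]]]. unfold f in Hf.
     destruct (dec (forall k, (k < N)%nat -> g v k - g v i < c)) eqn:E; [|discriminate].
     apply (proj1 (dec_true _)) in E. specialize (E k Hk). lra.
Qed.

Lemma simplex_N N z : in_simplex N z -> (0 < N)%nat.
Proof. intros [_ [H _]]. destruct N; [simpl in H; lra| lia]. Qed.

Definition nz (N : nat) (p : nat -> R) : nat -> R := fun i => if Nat.ltb i N then p i / rsum N p else 0.

Lemma rsum_pos N p : (0 < N)%nat -> (forall i, (i < N)%nat -> 0 < p i) -> 0 < rsum N p.
Proof. intros HN Hp. destruct N; [lia|]. simpl. assert (0 <= rsum N p) by (apply rsum_nonneg; intros; apply Rlt_le, Hp; lia).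
 specialize (Hp N ltac:(lia)). lra. Qed.

Lemma nz_simplex N p : (0 < N)%nat -> (forall i, (i < N)%nat -> 0 < p i) ->
  in_simplex N (nz N p) /\ forall i, (i < N)%nat -> 0 < nz N p i.
Proof. intros HN Hp. pose proof (rsum_pos N p HN Hp) as HS.
 assert (Hpos : forall i, (i < N)%nat -> 0 < nz N p i).
 { intros i Hi. unfold nz. destruct (Nat.ltb_spec i N); [|lia]. apply Rdiv_lt_0_compat; auto. }
 split; [|auto]. split; [|split].
 - intros i Hi; apply Rlt_le; auto.
 - unfold nz. rewrite (rsum_ext _ _ (fun i => / rsum N p * p i)).
   rewrite rsum_scal. field. lra. intros i Hi. destruct (Nat.ltb_spec i N); [|lia]. unfold Rdiv; ring.
 - intros i Hi. unfold nz. destruct (Nat.ltb_spec i N); [lia|auto]. Qed.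

Definition rmass N (F : nat -> Prop) y := rsum N (fun i => if dec (F i) then y i else 0).
Definition omass N (F : nat -> Prop) y := rsum N (fun i => if dec (F i) then 0 else y i).
Definition rn N (F : nat -> Prop) y : nat -> R :=
  fun i => if Nat.ltb i N then (if dec (F i) then y i / rmass N F y else 0) else 0.

Lemma rn_props N F y : in_simplex N y -> 0 < rmass N F y ->
  in_face_simplex N F (rn N F y) /\ dist1 N y (rn N F y) <= 2 * omass N F y.
Proof. intros [Hy0 [Hy1 Hy2]] Hm.
 assert (Hsplit : rmass N F y + omass N F y = 1) by (unfold rmass, omass; rewrite <- rsum_split; auto).
 assert (Ho : 0 <= omass N F y) by (apply rsum_nonneg; intros i Hi; destruct (dec (F i)); auto; lra).
 set (m := rmass N F y) in *.
 split; [split; [split; [|split]|]|].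
 - intros i Hi. unfold rn. destruct (Nat.ltb_spec i N); [|lia]. destruct (dec (F i)); [|lra].
   apply Rmult_le_pos; auto. apply Rlt_le, Rinv_0_lt_compat; auto.
 - unfold rn. rewrite (rsum_ext _ _ (fun i => / m * (if dec (F i) then y i else 0))).
   rewrite rsum_scal. change (rsum N (fun i => if dec (F i) then y i else 0)) with m. field. lra. intros i Hi. change (rmass N F y) with m. destruct (Nat.ltb_spec i N); [|lia]. destruct (dec (F i)); unfold Rdiv; ring.
 - intros i Hi. unfold rn. destruct (Nat.ltb_spec i N); [lia|auto].
 - intros i Hi nF. unfold rn. destruct (Nat.ltb_spec i N); [|lia].
   destruct (dec (F i)) eqn:E; auto. apply (proj1 (dec_true _)) in E. contradiction.
 - unfold dist1. rewrite (rsum_ext _ _ (fun i => (/ m - 1) * (if dec (F i) then y i else 0) + (if dec (F i) then 0 else y i))).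
   + rewrite rsum_plus, rsum_scal. change (rsum N (fun i => if dec (F i) then y i else 0)) with m. change (rsum N (fun i => if dec (F i) then 0 else y i)) with (omass N F y).
     replace ((/ m - 1) * m) with (1 - m) by (field; lra). lra.
   + intros i Hi. unfold rn. change (rmass N F y) with m. destruct (Nat.ltb_spec i N); [|lia]. specialize (Hy0 i Hi).
     assert (m <= 1) by lra.
     destruct (dec (F i)).
     * replace (y i - y i / m) with (- ((/ m - 1) * y i)) by (field; lra). rewrite Rabs_Ropp.
       rewrite Rabs_right. ring. apply Rle_ge. apply Rmult_le_pos; auto.
       assert (1 <= / m). { rewrite <- Rinv_1. apply Rinv_le_contravar; lra. } lra.
     * rewrite Rminus_0_r, Rabs_right by lra. ring.
Qed.

Lemma orbit_closure d N A F w z : torus_orbit_pt d N A F w z -> X_Fw d N A F w z.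
Proof. intros H. split. apply H. intros eps He. exists z. split; auto. rewrite d1_refl; auto. Qed.

Lemma mono_exp d s a : monomial d (fun j => exp (s j)) a = exp (rsum d (fun j => a j * s j)).
Proof. unfold monomial. f_equal. apply rsum_ext. intros. rewrite ln_exp. auto. Qed.

Definition ptw d (A : nat -> nat -> R) (lam w : nat -> R) t s i :=
  w i * exp (t * lam i + rsum d (fun j => A i j * s j)).

Lemma builder d N A lam w t s : (0 < N)%nat -> (forall i, (i < N)%nat -> 0 < w i) ->
  act_set N (lam_t lam t) (X_Fw d N A (fun i => (i < N)%nat) w) (nz N (ptw d A lam w t s)).
Proof. intros HN Hw.
 set (q := fun i => w i * monomial d (fun j => exp (s j)) (A i)).
 assert (Hq : forall i, (i < N)%nat -> 0 < q i) by (intros; unfold q; apply Rmult_lt_0_compat; [auto|apply exp_pos]).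
 assert (Hp : forall i, (i < N)%nat -> 0 < ptw d A lam w t s i) by (intros; unfold ptw; apply Rmult_lt_0_compat; [auto|apply exp_pos]).
 destruct (nz_simplex N q HN Hq) as [Sq _]. destruct (nz_simplex N _ HN Hp) as [Sp _].
 pose proof (rsum_pos N q HN Hq). pose proof (rsum_pos N _ HN Hp).
 exists (nz N q). split.
 - apply orbit_closure. split. split; auto. intros i Hi nF; contradiction.
   exists (fun j => exp (s j)). split. intros j _; apply exp_pos.
   exists (/ rsum N q). split. apply Rinv_0_lt_compat; auto. intros i Hi _. unfold nz.
   destruct (Nat.ltb_spec i N); [|lia]. unfold q. unfold Rdiv. ring.
 - split; auto. exists (rsum N q / rsum N (ptw d A lam w t s)). split. apply Rdiv_lt_0_compat; auto.
   intros i Hi. unfold nz. destruct (Nat.ltb_spec i N); [|lia].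
   assert (Hqi : q i = w i * exp (rsum d (fun j => A i j * s j))) by (unfold q; rewrite mono_exp; auto).
   rewrite Hqi. unfold ptw at 1. unfold lam_t. rewrite exp_plus. field. split; lra.
Qed.

Lemma act_lip N u z z' x y umin umax : 0 < umin ->
  (forall i, (i < N)%nat -> umin <= u i <= umax) -> in_simplex N z -> in_simplex N z' ->
  torus_act N u z x -> torus_act N u z' y -> dist1 N x y <= 2 * umax / umin * dist1 N z z'.
Proof. intros Hmin Hu [Hz0 [Hz1 _]] [Hz0' [Hz1' _]] [[_ [Hx1 _]] [c [Hc Hx]]] [[_ [Hy1 _]] [c' [Hc' Hy]]].
 set (S := rsum N (fun i => u i * z i)). set (S' := rsum N (fun i => u i * z' i)).
 assert (HcS : c * S = 1). { rewrite <- Hx1. unfold S. rewrite <- rsum_scal. symmetry. apply rsum_ext. intros; rewrite Hx; auto; ring. }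
 assert (HcS' : c' * S' = 1). { rewrite <- Hy1. unfold S'. rewrite <- rsum_scal. symmetry. apply rsum_ext. intros; rewrite Hy; auto; ring. }
 assert (HSm : umin <= S). { unfold S. rewrite <- (Rmult_1_r umin), <- Hz1, <- rsum_scal. apply rsum_le. intros i Hi.
   specialize (Hu i Hi); specialize (Hz0 i Hi). nra. }
 assert (Hcle : c <= / umin). { apply Rmult_le_reg_r with umin; auto. rewrite Rinv_l by lra. nra. }
 set (D := dist1 N z z').
 assert (HD : rsum N (fun i => u i * Rabs (z i - z' i)) <= umax * D).
 { unfold D, dist1. rewrite <- rsum_scal. apply rsum_le. intros i Hi. specialize (Hu i Hi).
   pose proof (Rabs_pos (z i - z' i)). nra. }
 assert (HSS : Rabs (S - S') <= umax * D).
 { unfold S, S'. rewrite <- rsum_minus. eapply Rle_trans. apply rsum_abs. eapply Rle_trans; [|apply HD].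
   apply rsum_le. intros i Hi. rewrite <- Rmult_minus_distr_l, Rabs_mult. specialize (Hu i Hi).
   rewrite (Rabs_right (u i)) by lra. lra. }
 assert (Hcc : Rabs (c - c') * S' = c * Rabs (S - S')).
 { replace (c - c') with (c * c' * (S' - S)).
   2:{ replace (c * c' * (S' - S)) with (c * (c' * S') - c' * (c * S)) by ring. rewrite HcS, HcS'. ring. }
   rewrite (Rabs_minus_sym S S').
   rewrite !Rabs_mult. rewrite (Rabs_right c) by lra. rewrite (Rabs_right c') by lra.
   replace (c * c' * Rabs (S' - S) * S') with (c * Rabs (S' - S) * (c' * S')) by ring. rewrite HcS'. ring. }
 unfold dist1. apply Rle_trans with (rsum N (fun i => c * (u i * Rabs (z i - z' i)) + Rabs (c - c') * (u i * z' i))).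
 - apply rsum_le. intros i Hi. rewrite Hx, Hy by auto. specialize (Hu i Hi). specialize (Hz0' i Hi).
   replace (c * (u i * z i) - c' * (u i * z' i)) with (c * (u i * (z i - z' i)) + (c - c') * (u i * z' i)) by ring.
   eapply Rle_trans. apply Rabs_triang. rewrite !Rabs_mult. rewrite (Rabs_right c) by lra.
   rewrite (Rabs_right (u i)) by lra. rewrite (Rabs_right (z' i)) by lra. lra.
 - rewrite rsum_plus, !rsum_scal. fold S'. rewrite Hcc.
   assert (c * rsum N (fun i => u i * Rabs (z i - z' i)) <= c * (umax * D)) by (apply Rmult_le_compat_l; lra).
   assert (c * Rabs (S - S') <= c * (umax * D)) by (apply Rmult_le_compat_l; lra).
   assert (0 <= D) by apply d1_nonneg.
   assert (0 <= umax) by (destruct N; [|specialize (Hu N ltac:(lia)); lra]; simpl in Hz1; lra).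
   assert (c * (umax * D) <= / umin * (umax * D)) by (apply Rmult_le_compat_r; [nra|auto]).
   replace (2 * umax / umin * D) with (2 * (/ umin * (umax * D))) by (field; lra). lra.
Qed.

Lemma ptw_eq d A lam w t s i : t <> 0 ->
  ptw d A lam w t s i = w i * exp (t * gfun d A lam (fun j => s j / t) i).
Proof. intros Ht. unfold ptw, gfun. f_equal. f_equal. rewrite Rmult_plus_distr_l, <- rsum_scal. f_equal.
 apply rsum_ext. intros. field; auto. Qed.

Lemma dir1 d N A lam w : (forall i, (i < N)%nat -> 0 < w i) ->
  forall eps, 0 < eps -> exists T, forall t, T < t -> forall x,
    act_set N (lam_t lam t) (X_Fw d N A (fun i => (i < N)%nat) w) x ->
    exists y, X_subdiv d N A lam w y /\ dist1 N x y < eps.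
Proof.
 intros Hw eps He.
 destruct (key_lemma d N A lam) as [c [Hc Hkey]].
 destruct (fin_pos_min N (fun _ => True) w) as [wmin [Hwmin Hwmin']]. intros; auto.
 set (W := rsum N w). set (K := W / wmin).
 assert (HW : 0 <= W) by (apply rsum_nonneg; intros; apply Rlt_le; auto).
 assert (HK : 0 <= K) by (unfold K; apply Rmult_le_pos; [auto|apply Rlt_le, Rinv_0_lt_compat; auto]).
 assert (Hal : 0 < eps / (4 * (INR N * K + 1))).
 { apply Rdiv_lt_0_compat; auto. pose proof (pos_INR N). nra. }
 destruct (exp_small c _ Hc Hal) as [T1 HT1].
 exists (Rmax 1 T1). intros t Ht x [z0 [[Hz0s Hz0c] Hact]].
 assert (Htpos : 0 < t) by (pose proof (Rmax_l 1 T1); lra).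
 assert (HtT1 : T1 < t) by (pose proof (Rmax_r 1 T1); lra).
 assert (HN : (0 < N)%nat) by (apply (simplex_N N z0); apply Hz0s).
 set (u := lam_t lam t).
 assert (Hupos : forall i, (i < N)%nat -> 0 < u i) by (intros; unfold u, lam_t; apply exp_pos).
 destruct (fin_pos_min N (fun _ => True) u) as [umin [Humin Humin']]. intros; auto.
 set (umax := rsum N u).
 assert (Hub : forall i, (i < N)%nat -> umin <= u i <= umax).
 { intros i Hi. split. apply Humin'; auto. apply rsum_elem_le; auto. intros; apply Rlt_le; auto. }
 assert (Humax : 0 < umax) by (unfold umax; apply rsum_pos; auto).
 set (L := 2 * umax / umin).
 assert (HL : 0 < L) by (unfold L; apply Rdiv_lt_0_compat; lra).
 destruct (Hz0c (eps / 2 / (L + 1))) as [z' [Horb Hdz]].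
 { apply Rdiv_lt_0_compat; lra. }
 destruct Horb as [Hz'f [x' [Hx'pos [c' [Hc' Hz']]]]].
 set (s := fun j => ln (x' j)).
 set (p := ptw d A lam w t s).
 assert (Hp : forall i, (i < N)%nat -> 0 < p i) by (intros; unfold p, ptw; apply Rmult_lt_0_compat; [auto|apply exp_pos]).
 destruct (nz_simplex N p HN Hp) as [Hys Hypos].
 pose proof (rsum_pos N p HN Hp) as HSp.
 set (y := nz N p).
 assert (Hyact : torus_act N u z' y).
 { split; auto. exists (/ (c' * rsum N p)). split. apply Rinv_0_lt_compat, Rmult_lt_0_compat; auto.
   intros i Hi. unfold y, nz. destruct (Nat.ltb_spec i N); [|lia]. rewrite Hz' by auto.
   assert (Hpi : p i = u i * (w i * monomial d x' (A i))) by (unfold p, ptw, u, lam_t, monomial; rewrite exp_plus; unfold s; ring).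
   rewrite Hpi. field. split; lra. }
 assert (Hxy : dist1 N x y < eps / 2).
 { eapply Rle_lt_trans. apply (act_lip N u z0 z' x y umin umax); auto. apply Hz0s. apply Hz'f.
   fold L. apply Rmult_lt_reg_r with (L + 1). lra. replace (eps / 2 / (L + 1) * (L + 1)) with (eps/2) in * by (field; lra).
   assert (L * dist1 N z0 z' <= L * (eps / 2 / (L + 1))) by (apply Rmult_le_compat_l; lra).
   replace (L * (eps / 2 / (L + 1))) with (eps / 2 * (L / (L + 1))) in H by (field; lra).
   assert (L / (L + 1) < 1). { apply Rmult_lt_reg_r with (L+1). lra. replace (L / (L + 1) * (L + 1)) with L by (field; lra). lra. }
   assert (eps / 2 * (L / (L + 1)) < eps / 2) by nra. pose proof (d1_nonneg N z0 z'). nra. }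
 set (v := fun j => s j / t).
 set (g := gfun d A lam v).
 destruct (Hkey v) as [v' Hv'].
 set (F := Ff d N A lam v').
 destruct (fin_argmax N g HN) as [j0 [Hj0 Hj0max]].
 assert (Fj0 : F j0). { apply Hv'; auto. intros k Hk. specialize (Hj0max k Hk). unfold g in Hj0max. lra. }
 assert (Hpeq : forall i, p i = w i * exp (t * g i)) by (intros; unfold p, g, v; apply ptw_eq; lra).
 assert (Hm : 0 < rmass N F y).
 { unfold rmass. apply Rlt_le_trans with ((fun i => if dec (F i) then y i else 0) j0).
   simpl. assert (dec (F j0) = true) as -> by (apply dec_true; auto). apply Hypos; auto.
   apply (rsum_elem_le N (fun i => if dec (F i) then y i else 0) j0); auto.
   intros i Hi. destruct (dec (F i)). left; apply Hypos; auto. right; auto. }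
 destruct (rn_props N F y Hys Hm) as [Hrnf Hrnd].
 assert (Hom : omass N F y <= INR N * (K * exp (- (t * c)))).
 { unfold omass. apply rsum_const_le. intros i Hi. destruct (dec (F i)) eqn:E.
   - apply Rmult_le_pos; auto. apply Rlt_le, exp_pos.
   - apply (proj1 (dec_false _)) in E.
     assert (Hk : exists k, (k < N)%nat /\ g k - g i >= c).
     { apply NNPP. intros Hn. apply E. apply Hv'; auto. intros k Hk. apply Rnot_ge_lt. intros Hge. apply Hn. exists k; auto. }
     destruct Hk as [k [Hk Hgk]].
     unfold y, nz. destruct (Nat.ltb_spec i N); [|lia].
     assert (Hpk : p k <= rsum N p) by (apply rsum_elem_le; auto; intros; apply Rlt_le; auto).
     apply Rle_trans with (p i / p k).
     + apply Rmult_le_compat_l. apply Rlt_le; auto. apply Rinv_le_contravar; auto.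
     + rewrite !Hpeq. unfold K, W.
       assert (Hwi : w i <= rsum N w) by (apply rsum_elem_le; auto; intros; apply Rlt_le; auto).
       assert (Hwk : wmin <= w k) by (apply Hwmin'; auto).
       assert (Hwk0 : 0 < w k) by auto.
       replace (w i * exp (t * g i) / (w k * exp (t * g k))) with ((w i / w k) * exp (t * g i - t * g k)).
       2:{ unfold Rminus. rewrite exp_plus, exp_Ropp. field. split; [apply Rgt_not_eq, exp_pos|lra]. }
       apply Rmult_le_compat.
       * apply Rlt_le, Rdiv_lt_0_compat; auto.
       * apply Rlt_le, exp_pos.
       * unfold Rdiv. apply Rmult_le_compat; auto. apply Rlt_le; auto. apply Rlt_le, Rinv_0_lt_compat; auto.
         apply Rinv_le_contravar; auto.
       * apply exp_le_3 || idtac. destruct (Rle_lt_or_eq_dec (t * g i - t * g k) (- (t * c))) as [Hlt|Heq].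
         nra. left. apply exp_increasing; auto. rewrite Heq; lra. }
 assert (Hyrn : dist1 N y (rn N F y) < eps / 2).
 { specialize (HT1 t HtT1). eapply Rle_lt_trans. apply Hrnd.
   assert (Hex : 0 < exp (- (t * c))) by apply exp_pos.
   assert (INR N * (K * exp (- (t * c))) <= (INR N * K + 1) * exp (- (t * c))) by nra.
   assert ((INR N * K + 1) * exp (- (t * c)) < (INR N * K + 1) * (eps / (4 * (INR N * K + 1)))).
   { apply Rmult_lt_compat_l; auto. pose proof (pos_INR N). nra. }
   replace ((INR N * K + 1) * (eps / (4 * (INR N * K + 1)))) with (eps / 4) in H0 by (field; pose proof (pos_INR N); nra).
   lra. }
 exists (rn N F y). split.
 - exists F. split. apply Ff_face. apply orbit_closure. split; auto.
   exists (fun j => exp (s j - t * v' j)). split. intros j _; apply exp_pos.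
   exists (exp (t * gfun d A lam v' j0) / (rsum N p * rmass N F y)). split.
   apply Rdiv_lt_0_compat. apply exp_pos. apply Rmult_lt_0_compat; auto.
   intros i Hi Fi. unfold rn. destruct (Nat.ltb_spec i N); [|lia].
   assert (dec (F i) = true) as -> by (apply dec_true; auto).
   unfold y, nz. destruct (Nat.ltb_spec i N); [|lia].
   assert (Hgi : gfun d A lam v' i = gfun d A lam v' j0).
   { destruct Fi as [_ Fi]. destruct Fj0 as [_ Fj0]. specialize (Fi j0 Hj0). specialize (Fj0 i Hi). lra. }
   rewrite <- Hgi. rewrite mono_exp.
   assert (Hpi2 : p i = exp (t * gfun d A lam v' i) * (w i * exp (rsum d (fun j => A i j * (s j - t * v' j))))).
   { unfold p, ptw. rewrite (Rmult_comm (exp _)), Rmult_assoc, <- exp_plus. f_equal. f_equal.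
     rewrite (rsum_ext d (fun j => A i j * (s j - t * v' j)) (fun j => A i j * s j - t * (A i j * v' j))) by (intros; ring).
     rewrite rsum_minus, rsum_scal. unfold gfun. ring. }
   rewrite Hpi2. change (rmass N F _) with (rmass N F y). field. split; lra.
 - eapply Rle_lt_trans. apply (d1_tri N x y). lra.
Qed.

Lemma dir2_pt d N A lam w F z eps : (forall i, (i < N)%nat -> 0 < w i) ->
  face_of_Slam d N A lam F -> X_Fw d N A F w z -> 0 < eps ->
  exists T, forall t, T < t -> exists x,
    act_set N (lam_t lam t) (X_Fw d N A (fun i => (i < N)%nat) w) x /\ dist1 N x z < eps.
Proof.
 intros Hw HF [Hzf Hzc] He.
 destruct (face_gaps d N A lam F HF) as [v [HFin HFout]].
 set (g := gfun d A lam v) in *.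
 destruct (Hzc (eps/2)) as [z' [[Hz'f [x' [Hx' [c' [Hc' Hz']]]]] Hdz]]. lra.
 assert (HN : (0 < N)%nat) by (apply (simplex_N N z'); apply Hz'f).
 destruct Hz'f as [[Hz'0 [Hz'1 Hz'2]] Hz'F].
 assert (Hj0 : exists j0, F j0).
 { apply NNPP. intros Hn. assert (rsum N z' = 0). { rewrite <- (rsum_zero N). apply rsum_ext. intros i Hi.
     apply Hz'F; auto. intros Fi; apply Hn; exists i; auto. } lra. }
 destruct Hj0 as [j0 Fj0]. destruct (HFin j0 Fj0) as [Hj0N Hj0max].
 destruct (fin_pos_min N (fun i => ~ F i) (fun i => g j0 - g i)) as [del [Hdel Hdel']].
 { intros i Hi nF. destruct (HFout i Hi nF) as [j [Hj Hlt]]. specialize (Hj0max j Hj). unfold g in *. lra. }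
 set (q := fun i => w i * monomial d x' (A i)).
 assert (Hq : forall i, (i < N)%nat -> 0 < q i) by (intros; unfold q; apply Rmult_lt_0_compat; [auto|apply exp_pos]).
 set (K2 := rsum N q / q j0).
 assert (HK2 : 0 < K2) by (unfold K2; apply Rdiv_lt_0_compat; [apply rsum_pos|]; auto).
 assert (Hal : 0 < eps / (4 * (INR N * K2 + 1))).
 { apply Rdiv_lt_0_compat; auto. pose proof (pos_INR N). nra. }
 destruct (exp_small del _ Hdel Hal) as [T1 HT1].
 exists (Rmax 0 T1). intros t Ht.
 assert (Ht0 : 0 < t) by (pose proof (Rmax_l 0 T1); lra).
 assert (HtT1 : T1 < t) by (pose proof (Rmax_r 0 T1); lra).
 set (s := fun j => ln (x' j) + t * v j).
 set (p := ptw d A lam w t s).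
 assert (Hpq : forall i, p i = q i * exp (t * g i)).
 { intros i. unfold p, ptw, q, g, gfun, monomial. rewrite Rmult_assoc, <- exp_plus. f_equal. f_equal.
   unfold s. rewrite (rsum_ext d _ (fun j => A i j * ln (x' j) + t * (A i j * v j))) by (intros; ring).
   rewrite rsum_plus, rsum_scal. ring. }
 assert (Hp : forall i, (i < N)%nat -> 0 < p i) by (intros; rewrite Hpq; apply Rmult_lt_0_compat; [auto|apply exp_pos]).
 destruct (nz_simplex N p HN Hp) as [Hys Hypos].
 pose proof (rsum_pos N p HN Hp) as HSp.
 set (y := nz N p).
 exists y. split. apply builder; auto.
 assert (Hm : 0 < rmass N F y).
 { unfold rmass. apply Rlt_le_trans with ((fun i => if dec (F i) then y i else 0) j0).
   simpl. assert (dec (F j0) = true) as -> by (apply dec_true; auto). apply Hypos; auto.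
   apply (rsum_elem_le N (fun i => if dec (F i) then y i else 0) j0); auto.
   intros i Hi. destruct (dec (F i)). left; apply Hypos; auto. right; auto. }
 destruct (rn_props N F y Hys Hm) as [[[Hr0 [Hr1 _]] _] Hrnd].
 set (kap := exp (t * g j0) / (rsum N p * rmass N F y)).
 assert (Hrn : forall i, (i < N)%nat -> rn N F y i = kap * (if dec (F i) then q i else 0)).
 { intros i Hi. unfold rn. destruct (Nat.ltb_spec i N); [|lia]. destruct (dec (F i)) eqn:E.
   - apply (proj1 (dec_true _)) in E. unfold y at 1, nz. destruct (Nat.ltb_spec i N); [|lia].
     rewrite Hpq. destruct (HFin i E) as [_ Hi']. assert (Hgg : g i = g j0) by (specialize (Hi' j0 Hj0N); specialize (Hj0max i Hi); unfold g in *; lra).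
     rewrite Hgg. unfold kap. field. split; lra.
   - ring. }
 assert (Hz'e : forall i, (i < N)%nat -> z' i = c' * (if dec (F i) then q i else 0)).
 { intros i Hi. destruct (dec (F i)) eqn:E. apply (proj1 (dec_true _)) in E. rewrite Hz'; auto.
   apply (proj1 (dec_false _)) in E. rewrite Hz'F; auto. ring. }
 set (Qf := rsum N (fun i => if dec (F i) then q i else 0)).
 assert (HQf : 0 < Qf).
 { unfold Qf. apply Rlt_le_trans with ((fun i => if dec (F i) then q i else 0) j0).
   simpl. assert (dec (F j0) = true) as -> by (apply dec_true; auto). apply Hq; auto.
   apply (rsum_elem_le N (fun i => if dec (F i) then q i else 0) j0); auto.
   intros i Hi. destruct (dec (F i)). left; apply Hq; auto. right; auto. }
 assert (Hk1 : kap * Qf = 1). { rewrite <- Hr1. unfold Qf. rewrite <- rsum_scal. symmetry. apply rsum_ext. auto. }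
 assert (Hk2 : c' * Qf = 1). { rewrite <- Hz'1. unfold Qf. rewrite <- rsum_scal. symmetry. apply rsum_ext. auto. }
 assert (Hkc : kap = c') by (apply Rmult_eq_reg_r with Qf; lra).
 assert (Hyz' : dist1 N y z' < eps / 2).
 { replace (dist1 N y z') with (dist1 N y (rn N F y)).
   2:{ unfold dist1. apply rsum_ext. intros i Hi. rewrite Hrn, Hz'e, Hkc; auto. }
   eapply Rle_lt_trans. apply Hrnd.
   assert (Hom : omass N F y <= INR N * (K2 * exp (- (t * del)))).
   { unfold omass. apply rsum_const_le. intros i Hi. destruct (dec (F i)) eqn:E.
     - apply Rmult_le_pos; [lra|apply Rlt_le, exp_pos].
     - apply (proj1 (dec_false _)) in E. specialize (Hdel' i Hi E).
       unfold y, nz. destruct (Nat.ltb_spec i N); [|lia].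
       assert (Hpk : p j0 <= rsum N p) by (apply rsum_elem_le; auto; intros; apply Rlt_le; auto).
       apply Rle_trans with (p i / p j0).
       + apply Rmult_le_compat_l. apply Rlt_le; auto. apply Rinv_le_contravar; auto.
       + rewrite !Hpq. unfold K2.
         assert (Hqi : q i <= rsum N q) by (apply rsum_elem_le; auto; intros; apply Rlt_le; auto).
         pose proof (Hq j0 Hj0N).
         replace (q i * exp (t * g i) / (q j0 * exp (t * g j0))) with ((q i / q j0) * exp (- (t * (g j0 - g i)))).
         2:{ rewrite exp_Ropp. replace (t * (g j0 - g i)) with (t * g j0 + - (t * g i)) by ring.
             rewrite exp_plus, exp_Ropp. field. repeat split; try lra; apply Rgt_not_eq, exp_pos. }
         apply Rmult_le_compat.
         * apply Rlt_le, Rdiv_lt_0_compat; auto.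
         * apply Rlt_le, exp_pos.
         * unfold Rdiv. apply Rmult_le_compat_r; auto. apply Rlt_le, Rinv_0_lt_compat; auto.
         * destruct (Req_dec (t * (g j0 - g i)) (t * del)) as [Heq|Hne]. rewrite Heq; lra.
           left. apply exp_increasing. assert (t * del <= t * (g j0 - g i)) by (apply Rmult_le_compat_l; lra). lra. }
   specialize (HT1 t HtT1).
   assert (Hex : 0 < exp (- (t * del))) by apply exp_pos.
   assert (INR N * (K2 * exp (- (t * del))) <= (INR N * K2 + 1) * exp (- (t * del))) by nra.
   assert ((INR N * K2 + 1) * exp (- (t * del)) < (INR N * K2 + 1) * (eps / (4 * (INR N * K2 + 1)))).
   { apply Rmult_lt_compat_l; auto. pose proof (pos_INR N). nra. }
   replace ((INR N * K2 + 1) * (eps / (4 * (INR N * K2 + 1)))) with (eps / 4) in H0 by (field; pose proof (pos_INR N); nra).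
   lra. }
 eapply Rle_lt_trans. apply (d1_tri N y z'). rewrite (d1_sym N z' z). lra.
Qed.

Lemma nat_above r : exists n : nat, r < INR n.
Proof. destruct (archimed r) as [H1 _]. destruct (Z_lt_le_dec (up r) 0) as [Hl|Hl].
 - exists 0%nat. simpl. apply IZR_lt in Hl. lra.
 - exists (Z.to_nat (up r)). rewrite INR_IZR_INZ, Z2Nat.id by lia. lra. Qed.

Lemma round_nat M y : 0 <= y <= INR M -> exists k, (k <= M)%nat /\ Rabs (y - INR k) <= 1.
Proof. induction M; intros [H1 H2].
 - exists 0%nat. split; auto. simpl in *. replace (y - 0) with 0 by lra. rewrite Rabs_R0; lra.
 - rewrite S_INR in H2. destruct (Rle_dec y (INR M)).
   + destruct IHM as [k [Hk Hk']]. lra. exists k. split; auto.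
   + exists (S M). split; auto. rewrite S_INR. rewrite Rabs_left1 by lra. lra. Qed.

Definition gp (M : nat) (f : nat -> nat) : nat -> R := fun i => INR (f i) / INR M.

Lemma grid_approx N M z : (0 < M)%nat -> in_simplex N z ->
  exists f, (forall i, (f i <= M)%nat) /\ dist1 N z (gp M f) <= INR N / INR M.
Proof. intros HM [Hz0 [Hz1 _]].
 assert (HMr : 0 < INR M) by (apply lt_0_INR; auto).
 assert (H : forall i, exists k, (k <= M)%nat /\ ((i < N)%nat -> Rabs (z i - INR k / INR M) <= / INR M)).
 { intros i. destruct (Nat.lt_ge_cases i N) as [Hi|Hi].
   - assert (zi1 : z i <= 1) by (rewrite <- Hz1; apply rsum_elem_le; auto).
     destruct (round_nat M (z i * INR M)) as [k [Hk Hk']]. specialize (Hz0 i Hi). split; nra.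
     exists k. split; auto. intros _.
     replace (z i - INR k / INR M) with ((z i * INR M - INR k) * / INR M) by (field; lra).
     rewrite Rabs_mult, (Rabs_right (/ INR M)) by (apply Rle_ge, Rlt_le, Rinv_0_lt_compat; auto).
     pose proof (Rinv_0_lt_compat _ HMr). nra.
   - exists 0%nat. split; [lia|]. intros; lia. }
 set (f := fun i => proj1_sig (constructive_indefinite_description _ (H i))).
 exists f. split.
 - intros i. unfold f. destruct (constructive_indefinite_description _ (H i)) as [k [Hk Hk2]]; simpl; auto.
 - unfold dist1. replace (INR N / INR M) with (INR N * / INR M) by (unfold Rdiv; auto). apply rsum_const_le.
   intros i Hi. unfold f, gp. destruct (constructive_indefinite_description _ (H i)) as [k [Hk0 Hk]]; simpl. auto. Qed.

Lemma dir2_face d N A lam w F : (forall i, (i < N)%nat -> 0 < w i) -> face_of_Slam d N A lam F ->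
  forall eps, 0 < eps -> exists T, forall t, T < t -> forall z, X_Fw d N A F w z -> exists x,
    act_set N (lam_t lam t) (X_Fw d N A (fun i => (i < N)%nat) w) x /\ dist1 N x z < eps.
Proof.
 intros Hw HF eps He.
 destruct (nat_above (4 * INR N / eps)) as [M HM].
 assert (HM0 : (0 < M)%nat). { destruct M; [|lia]. simpl in HM. pose proof (pos_INR N).
   assert (0 <= 4 * INR N / eps) by (apply Rmult_le_pos; [lra|apply Rlt_le, Rinv_0_lt_compat; auto]). lra. }
 assert (HMr : 0 < INR M) by (apply lt_0_INR; auto).
 set (d1 := INR N / INR M).
 assert (Hd1 : d1 < eps / 4).
 { unfold d1. apply Rmult_lt_reg_r with (INR M); auto. replace (INR N / INR M * INR M) with (INR N) by (field; lra).
   apply Rmult_lt_compat_l with (r := eps) in HM; auto. replace (eps * (4 * INR N / eps)) with (4 * INR N) in HM by (field; lra). lra. }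
 destruct (fin_unif M N (fun f e => forall z0, X_Fw d N A F w z0 -> dist1 N z0 (gp M f) <= d1 ->
    forall t, / e < t -> exists x, act_set N (lam_t lam t) (X_Fw d N A (fun i => (i < N)%nat) w) x /\ dist1 N x z0 < eps))
   as [e [He0 Hall]].
 - intros f g e Hfg Hf z0 Hz0 Hd t Ht. apply (Hf z0 Hz0); auto.
   replace (dist1 N z0 (gp M f)) with (dist1 N z0 (gp M g)); auto. unfold dist1, gp. apply rsum_ext. intros i Hi. rewrite Hfg; auto.
 - intros f e e' He' Hle Hf z0 Hz0 Hd t Ht. apply (Hf z0 Hz0 Hd). assert (/ e <= / e') by (apply Rinv_le_contravar; auto). lra.
 - intros f _. destruct (classic (exists zs, X_Fw d N A F w zs /\ dist1 N zs (gp M f) <= d1)) as [[zs [Hzs Hdzs]]|NE].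
   + destruct (dir2_pt d N A lam w F zs (eps/2) Hw HF Hzs) as [Ts HTs]. lra.
     exists (/ (Rabs Ts + 1)). split. apply Rinv_0_lt_compat. pose proof (Rabs_pos Ts); lra.
     intros z0 Hz0 Hd t Ht. rewrite Rinv_inv in Ht. destruct (HTs t) as [x [Hx Hdx]].
     pose proof (Rle_abs Ts). lra. exists x. split; auto.
     eapply Rle_lt_trans. apply (d1_tri N x zs). eapply Rle_lt_trans with (eps/2 + dist1 N zs z0). lra.
     assert (dist1 N zs z0 <= 2 * d1). { eapply Rle_trans. apply (d1_tri N zs (gp M f)). rewrite (d1_sym N (gp M f) z0). lra. }
     lra.
   + exists 1. split; [lra|]. intros z0 Hz0 Hd. exfalso. apply NE. exists z0; auto.
 - exists (/ e). intros t Ht z Hz. destruct (grid_approx N M z HM0) as [f [Hf Hdf]].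
   destruct Hz as [[Hzs _] _]; auto. apply (Hall f Hf z Hz Hdf t Ht).
Qed.

Lemma face_ext d N A lam F G : (forall i, F i <-> G i) -> face_of_Slam d N A lam F -> face_of_Slam d N A lam G.
Proof. intros H [nrm [Hd HF]]. exists nrm. split; auto. intros i. rewrite <- H. auto. Qed.

Lemma X_ext d N A F G w z : (forall i, F i <-> G i) -> X_Fw d N A F w z -> X_Fw d N A G w z.
Proof. intros H [[Hs Hf] Hc]. split. split; auto. intros i Hi nG. apply Hf; auto. rewrite H; auto.
 intros eps He. destruct (Hc eps He) as [y [[[Hys Hyf] Ho] Hd]]. exists y. split; auto.
 split. split; auto. intros i Hi nG. apply Hyf; auto. rewrite H; auto.
 destruct Ho as [x [Hx [c [Hc' Hy]]]]. exists x. split; auto. exists c. split; auto. intros i Hi Gi. apply Hy; auto. rewrite H; auto. Qed.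

Lemma dir2_all d N A lam w : (forall i, (i < N)%nat -> 0 < w i) ->
  forall eps, 0 < eps -> exists T, forall t, T < t -> forall z, X_subdiv d N A lam w z -> exists x,
    act_set N (lam_t lam t) (X_Fw d N A (fun i => (i < N)%nat) w) x /\ dist1 N x z < eps.
Proof.
 intros Hw eps He.
 set (Fb := fun (f : nat -> nat) i => (i < N)%nat /\ f i = 1%nat).
 destruct (fin_unif 1 N (fun f e => face_of_Slam d N A lam (Fb f) -> forall t, / e < t -> forall z, X_Fw d N A (Fb f) w z ->
    exists x, act_set N (lam_t lam t) (X_Fw d N A (fun i => (i < N)%nat) w) x /\ dist1 N x z < eps)) as [e [He0 Hall]].
 - intros f g e Hfg Hf Hface t Ht z Hz.
   assert (Hiff : forall i, Fb f i <-> Fb g i). { intros i. unfold Fb. split; intros [Hi Hv]; split; auto; [rewrite <- Hfg|rewrite Hfg]; auto. }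
   apply (Hf (face_ext _ _ _ _ _ _ (fun i => iff_sym (Hiff i)) Hface) t Ht z).
   apply (X_ext _ _ _ _ _ _ _ (fun i => iff_sym (Hiff i)) Hz).
 - intros f e e' He' Hle Hf Hface t Ht. apply Hf; auto. assert (/ e <= / e') by (apply Rinv_le_contravar; auto). lra.
 - intros f _. destruct (classic (face_of_Slam d N A lam (Fb f))) as [Hface|NF].
   + destruct (dir2_face d N A lam w (Fb f) Hw Hface eps He) as [T HT].
     exists (/ (Rabs T + 1)). split. apply Rinv_0_lt_compat. pose proof (Rabs_pos T); lra.
     intros _ t Ht. rewrite Rinv_inv in Ht. apply HT. pose proof (Rle_abs T). lra.
   + exists 1. split; [lra|]. intros H; contradiction.
 - exists (/ e). intros t Ht z [F [HF Hz]].
   set (f := fun i => if dec (F i) then 1%nat else 0%nat).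
   assert (Hiff : forall i, F i <-> Fb f i).
   { intros i. unfold Fb, f. split.
     - intros Fi. split. destruct HF as [nrm [_ HF]]. apply HF in Fi. apply Fi.
       assert (dec (F i) = true) as -> by (apply dec_true; auto). auto.
     - intros [_ Hf]. destruct (dec (F i)) eqn:E; [apply (proj1 (dec_true _)) in E; auto|discriminate]. }
   apply (Hall f). intros i; unfold f; destruct (dec (F i)); lia.
   apply (face_ext _ _ _ _ _ _ Hiff HF). auto. apply (X_ext _ _ _ _ _ _ _ Hiff Hz).
Qed.

Theorem mainTheorem7 (d N : nat) (A : nat -> nat -> R)
    (HA : forall i j, (i < N)%nat -> (j < N)%nat ->
          (forall k, (k < d)%nat -> A i k = A j k) -> i = j)
    (lam w : nat -> R) (Hw : forall i, (i < N)%nat -> 0 < w i) :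
  hausdorff_conv N
    (fun t => act_set N (lam_t lam t) (X_Fw d N A (fun i => (i < N)%nat) w))
    (X_subdiv d N A lam w).
Proof.
  intros eps He.
  destruct (dir1 d N A lam w Hw eps He) as [T1 H1].
  destruct (dir2_all d N A lam w Hw eps He) as [T2 H2].
  exists (Rmax T1 T2). intros t Ht. split.
  - intros x Hx. apply (H1 t); auto. pose proof (Rmax_l T1 T2); lra.
  - intros y Hy. apply (H2 t); auto. pose proof (Rmax_r T1 T2); lra.
Qed.
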